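(* For each $n$ let $\mathcal{C},\mathcal{C}'$ be conjugacy classes of $S_n$ whose elements have $c_j$ (resp. $c'_j$) $j$-cycles, with total cycle counts $c=\sum_j c_j$ and $c'=\sum_j c'_j$. Let $\pi\in\mathcal{C}$, $\pi'\in\mathcal{C}'$ be independent and uniform, and let $N_k$ be the number of orbits of size $k$ of $\langle\pi,\pi'\rangle$ on $\{1,\dots,n\}$. Assume $c_1+c'_1=o(n)$ and that there is a constant $\delta>0$ with $c+c'\leq(1-\delta)n$. Then there are a constant $\eta>0$ and a function $g(n)=o(n)$ such that for all $1\leq k\leq n/2$, \[ \mathbf{E} N_k \leq e^{-\eta k + g(n)}. \]
   Context: Asymptotic notation is with respect to $n\to\infty$. *)

(* Defs.v *)
From HB Require Import structures.
From mathcomp Require Import all_boot all_order all_algebra all_fingroup.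
From mathcomp Require Import reals sequences exp.
Set Implicit Arguments. Unset Strict Implicit. Unset Printing Implicit Defensive.
Import Order.TTheory GRing.Theory Num.Theory.

Definition cycle_count (T : finType) (s : {perm T}) (j : nat) : nat :=
  #|[set O in porbits s | #|O| == j]|.

Definition total_cycles (T : finType) (s : {perm T}) : nat := #|porbits s|.

Definition conj_class (T : finType) (s : {perm T}) : {set {perm T}} :=
  (s ^: [set: {perm T}])%g.

Definition N_orbits (T : finType) (p q : {perm T}) (k : nat) : nat :=
  #|[set O in (orbit 'P <<[set p; q]>>%g) @: [set: T] | #|O| == k]|.

Local Open Scope ring_scope.

Definition EN (R : realType) (T : finType) (s t : {perm T}) (k : nat) : R :=
  (\sum_(p in conj_class s) \sum_(q in conj_class t) (N_orbits p q k)%:R)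
  / (#|conj_class s| * #|conj_class t|)%:R.

Definition little_o_n (R : realType) (f : nat -> R) : Prop :=
  forall eps : R, 0 < eps -> exists N : nat, forall n : nat, (N <= n)%N ->
    `|f n| <= eps * n%:R.

(* Main.v *)
Require Import Defs.
From HB Require Import structures.
From mathcomp Require Import all_boot all_order all_algebra all_fingroup.
From mathcomp Require Import reals sequences exp.
From mathcomp Require Import zify ring lra.
Import Order.TTheory GRing.Theory Num.Theory.
Set Implicit Arguments. Unset Strict Implicit. Unset Printing Implicit Defensive.

Section Comb.
Variable T : finType.

Definition pinv (p : {perm T}) (S : {set T}) := [forall x in S, p x \in S].
Definition Inv (p : {perm T}) k := [set S : {set T} | (#|S| == k) && pinv p S].

Lemma N_orbits_le p q k :
  N_orbits p q k <= #|[set S : {set T} | [&& #|S| == k, pinv p S & pinv q S]]|.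
Proof.
apply: subset_leq_card; apply/subsetP => O; rewrite !inE => /andP[/imsetP[z _ ->] /eqP hk].
rewrite hk eqxx /=.
have hG : forall r, r \in [set p; q] -> pinv r (orbit 'P <<[set p; q]>> z).
  move=> r hr; apply/forall_inP => y hy.
  have h : 'P%act y r \in orbit 'P <<[set p;q]>> y by apply: mem_orbit; apply: mem_gen.
  exact: orbit_trans h hy.
by rewrite !hG // !inE eqxx ?orbT.
Qed.

Lemma trans_sets (S S' : {set T}) : #|S| = #|S'| -> exists sg : {perm T}, sg @: S = S'.
Proof.
move: {2}#|S :\: S'| (leqnn #|S :\: S'|) => m; elim: m S => [|m IH] S hm hc.
  have sub: S \subset S' by rewrite -setD_eq0 -cards_eq0 -leqn0.
  exists 1%g; have -> : S = S' by apply/eqP; rewrite eqEcard sub hc leqnn.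
  by apply/setP => x; rewrite (eq_imset _ (@perm1 T)) imset_id.
case: (set_0Vmem (S :\: S')) => [h0|[x hx]].
  by apply: IH => //; rewrite h0 cards0.
have [y hy]: exists y, y \in S' :\: S.
  case: (set_0Vmem (S' :\: S)) => [h0|[y hy]]; last by exists y.
  have sub : S' \subset S by rewrite -setD_eq0 h0.
  have eS : S' = S by apply/eqP; rewrite eqEcard sub hc leqnn.
  by move: hx; rewrite eS setDv inE.
move: hx hy; rewrite !inE => /andP[xS' xS] /andP[yS yS'].
set S1 := tperm x y @: S.
have [sg hsg] : exists sg : {perm T}, sg @: S1 = S'.
  apply: (IH S1); last by rewrite /S1 card_imset //; apply: perm_inj.
  have sub : S1 :\: S' \subset (S :\: S') :\ x.
    apply/subsetP => z; rewrite /S1 (can_imset_pre _ (tpermK x y)) !inE.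
    case: tpermP => [->|->|hzx hzy]; rewrite ?permE /=.
    - by rewrite (negbTE yS) andbF.
    - by rewrite yS'.
    - by move=> /andP[-> ->]; rewrite !andbT; apply/eqP.
  rewrite -ltnS; apply: leq_ltn_trans (subset_leq_card sub) _.
  rewrite (cardsD1 x (S :\: S')) !inE xS xS' /= in hm.
  by [].  
exists (tperm x y * sg)%g; rewrite -hsg /S1 -imset_comp.
by apply: eq_imset => z; rewrite permM.
Qed.

Lemma pinvJ p (sg : {perm T}) S : pinv p S -> pinv (p ^ sg)%g (sg @: S).
Proof.
move=> /forall_inP h; apply/forall_inP => _ /imsetP[z hz ->]; rewrite permJ.
by apply: imset_f; apply: h.
Qed.

Lemma class_conj (s p sg : {perm T}) :
  p \in conj_class s -> (p ^ sg)%g \in conj_class s.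
Proof.
rewrite /conj_class => /imsetP[tau _ ->]; rewrite -conjgM; apply: memJ_class.
exact: in_setT.
Qed.

Definition hcount (C : {set {perm T}}) S := #|[set p in C | pinv p S]|.

Lemma hcount_le s S (sg : {perm T}) : hcount (conj_class s) S <= hcount (conj_class s) (sg @: S).
Proof.
rewrite /hcount -(card_imset _ (conjg_inj sg)).
apply: subset_leq_card; apply/subsetP => _ /imsetP[p hp ->].
move: hp; rewrite !inE => /andP[hC hi]; rewrite class_conj //=.
exact: pinvJ.
Qed.

Lemma hcount_const s (S S' : {set T}) : #|S| = #|S'| ->
  hcount (conj_class s) S = hcount (conj_class s) S'.
Proof.
move=> hc; have [sg1 h1] := trans_sets hc; have [sg2 h2] := trans_sets (esym hc).
apply/eqP; rewrite eqn_leq; apply/andP; split.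
  by rewrite -h1; apply: hcount_le.
by rewrite -h2; apply: hcount_le.
Qed.

Lemma Inv_le p (sg : {perm T}) k : #|Inv p k| <= #|Inv (p ^ sg)%g k|.
Proof.
rewrite -(card_imset _ (imset_inj (@perm_inj _ sg))).
apply: subset_leq_card; apply/subsetP => _ /imsetP[S hS ->].
move: hS; rewrite !inE => /andP[hk hi].
by rewrite card_imset ?hk; [apply: pinvJ | apply: perm_inj].
Qed.

Lemma Inv_class s p k : p \in conj_class s -> #|Inv p k| = #|Inv s k|.
Proof.
rewrite /conj_class => /imsetP[tau _ ->].
apply/eqP; rewrite eqn_leq Inv_le andbT.
by have := Inv_le (s ^ tau)%g tau^-1 k; rewrite conjgK.
Qed.


Lemma hcountE C S : hcount C S = \sum_(p in C) (pinv p S : nat).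
Proof.
rewrite /hcount -sum1_card [LHS]big_mkcond [RHS]big_mkcond /=.
by apply: eq_bigr => p _; rewrite inE; case: (p \in C); case: pinv.
Qed.

Lemma hsum_all s k :
  \sum_(S in [set S : {set T} | #|S| == k]) hcount (conj_class s) S
  = #|conj_class s| * #|Inv s k|.
Proof.
transitivity (\sum_(p in conj_class s) #|Inv p k|).
  under eq_bigr do rewrite hcountE.
  rewrite exchange_big /=; apply: eq_bigr => p _.
  rewrite -sum1_card [LHS]big_mkcond [RHS]big_mkcond /=.
  by apply: eq_bigr => S _; rewrite !inE; case: (#|S| == k); case: pinv.
rewrite (eq_bigr (fun _ => #|Inv s k|)) ?sum_nat_const //.
by move=> p hp; apply: Inv_class.
Qed.

Lemma hsum s k (S : {set T}) : #|S| = k ->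
  'C(#|T|, k) * hcount (conj_class s) S = #|conj_class s| * #|Inv s k|.
Proof.
move=> hS; rewrite -hsum_all.
rewrite (eq_bigr (fun _ => hcount (conj_class s) S)); last first.
  by move=> S'; rewrite inE => /eqP h; apply: hcount_const; rewrite h.
by rewrite sum_nat_const card_draws.
Qed.

Lemma sumN_le s t k :
  (\sum_(p in conj_class s) \sum_(q in conj_class t) N_orbits p q k) * 'C(#|T|, k)
   <= #|conj_class s| * #|Inv s k| * (#|conj_class t| * #|Inv t k|).
Proof.
set Sk := [set S : {set T} | #|S| == k].
have step1 : \sum_(p in conj_class s) \sum_(q in conj_class t) N_orbits p q k <=
   \sum_(S in Sk) hcount (conj_class s) S * hcount (conj_class t) S.
  under [X in _ <= X]eq_bigr do rewrite !hcountE big_distrl /=.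
  rewrite [X in _ <= X]exchange_big /=; apply: leq_sum => p hp.
  under [X in _ <= X]eq_bigr do rewrite big_distrr /=.
  rewrite [X in _ <= X]exchange_big /=; apply: leq_sum => q hq.
  apply: leq_trans (N_orbits_le p q k) _.
  rewrite -sum1_card [X in X <= _]big_mkcond [X in _ <= X]big_mkcond /=.
  by apply: leq_sum => S _; rewrite !inE; case: (#|S| == k); case: pinv; case: pinv.
apply: leq_trans (leq_mul step1 (leqnn _)) _.
rewrite big_distrl /=.
rewrite (eq_bigr (fun S => hcount (conj_class s) S * (#|conj_class t| * #|Inv t k|))); last first.
  by move=> S; rewrite inE => /eqP hS; rewrite -mulnA [_ * 'C(_, _)]mulnC hsum.
by rewrite -big_distrl /= hsum_all.
Qed.
End Comb.

Section Binom.
Variables n k : nat.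
Hypothesis k0 : 0 < k.
Hypothesis kn : k < n.

Let Tm i := 'C(n, i) * ((n - k) ^ (n - i) * k ^ i).

Lemma Tm_rec i : i < n -> Tm i.+1 * (i.+1 * (n - k)) = Tm i * ((n - i) * k).
Proof.
move=> hi; rewrite /Tm.
have e1 := mul_bin_left n i.
have e2 : (n - k) ^ (n - i) = (n - k) ^ (n - i.+1) * (n - k).
  by rewrite -expnSr; congr (_ ^ _); lia.
rewrite e2 expnS.
set C1 := 'C(n, i.+1) in e1 *; set C0 := 'C(n, i) in e1 *.
set P := (n - k) ^ (n - i.+1); set Q := k ^ i.
have -> : C1 * (P * (k * Q)) * (i.+1 * (n - k)) = (i.+1 * C1) * (P * (n - k) * Q * k).
  by rewrite !mulnA; lia.
rewrite e1; lia.
Qed.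

Lemma Tm_up i : i < k -> Tm i <= Tm i.+1.
Proof.
move=> hi; have hc : 0 < i.+1 * (n - k) by rewrite muln_gt0 /=; lia.
rewrite -(leq_pmul2r hc) Tm_rec; last by lia.
by apply: leq_mul => //; nia.
Qed.

Lemma Tm_down i : k <= i -> i < n -> Tm i.+1 <= Tm i.
Proof.
move=> h1 h2; have hc : 0 < i.+1 * (n - k) by rewrite muln_gt0 /=; lia.
rewrite -(leq_pmul2r hc) Tm_rec //.
by apply: leq_mul => //; nia.
Qed.

Lemma Tm_max i : i <= n -> Tm i <= Tm k.
Proof.
move=> hi; case: (leqP i k) => hik.
  have H : forall j, j <= k -> Tm (k - j) <= Tm k.
    elim=> [|j IH] hj; first by rewrite subn0.
    apply: leq_trans (IH (ltnW hj)).
    have -> : k - j = (k - j.+1).+1 by lia.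
    by apply: Tm_up; lia.
  by have := H (k - i); rewrite subKn //; apply; rewrite leq_subr.
have H : forall j, k + j <= n -> Tm (k + j) <= Tm k.
  elim=> [|j IH] hj; first by rewrite addn0.
  apply: leq_trans (IH (ltnW _)); last by lia.
  by rewrite addnS; apply: Tm_down; lia.
by have := H (i - k); rewrite subnKC ?(ltnW hik) //; apply.
Qed.

Lemma binom_lower : n ^ n <= n.+1 * ('C(n, k) * ((n - k) ^ (n - k) * k ^ k)).
Proof.
have -> : n ^ n = (n - k + k) ^ n by rewrite subnK // ltnW.
rewrite expnDn.
apply: leq_trans (_ : \sum_(i < n.+1) Tm k <= _); last by rewrite sum_nat_const card_ord.
apply: leq_sum => i _; apply: Tm_max; exact: (ltn_ord i).
Qed.

End Binom.

Section Gen.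
Variable R : realFieldType.
Local Open Scope ring_scope.

Lemma sum_subsets (U : finType) (w : U -> R) :
  \sum_(A : {set U}) \prod_(i in A) w i = \prod_(i : U) (1 + w i).
Proof.
rewrite (eq_bigr (fun i => \sum_(b : bool) (if b then w i else 1))); last first.
  by move=> i _; rewrite big_bool /= addrC.
rewrite bigA_distr_bigA /=.
rewrite (reindex (fun f : {ffun U -> bool} => [set i | f i])) /=; last first.
  apply: onW_bij; exists (fun A : {set U} => [ffun i => i \in A]).
    by move=> f; apply/ffunP => i; rewrite ffunE inE.
  by move=> A; apply/setP => i; rewrite inE ffunE.
apply: eq_bigr => f _; rewrite big_mkcond /=.
by apply: eq_bigr => i _; rewrite inE.
Qed.

Variable T : finType.

Lemma trivI_porbits (s : {perm T}) : trivIset (porbits s).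
Proof.
apply/trivIsetP => _ _ /imsetP[x _ ->] /imsetP[y _ ->] hne.
rewrite -setI_eq0; apply/eqP/setP => z; rewrite !inE; apply/negP => /andP[hx hy].
have ex : porbit s z = porbit s x by apply/eqP; rewrite eq_porbit_mem.
have ey : porbit s z = porbit s y by apply/eqP; rewrite eq_porbit_mem.
by rewrite -ex -ey eqxx in hne.
Qed.

Definition msz (s : {perm T}) (S : {set T}) :=
  #|[set O in porbits s | (O \subset S) && (#|O| != 1%N)]|.

Lemma msz_le (s : {perm T}) (S : {set T}) : ((msz s S).*2 <= #|S|)%N.
Proof.
set A := [set O in porbits s | O \subset S].
have tA : trivIset A by apply: trivIsetS (trivI_porbits s); apply/subsetP => O; rewrite inE => /andP[].
have e : (\sum_(O in A) #|O| = #|cover A|)%N by apply/eqP; exact: tA.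
have sub : cover A \subset S.
  by apply/bigcupsP => O; rewrite inE => /andP[].
apply: leq_trans (subset_leq_card sub); rewrite -e.
rewrite /msz -sum1_card -muln2 big_distrl /=.
rewrite [X in (X <= _)%N]big_mkcond [X in (_ <= X)%N]big_mkcond /=.
apply: leq_sum => O _; rewrite !inE.
case hO: (O \in porbits s) => //=; case: (O \subset S) => //=.
case: eqP => //= h1; move: hO => /imsetP[x _ ->] in h1 *.
have := card_porbit_neq0 s x; case: #|porbit s x| h1 => [|[|n]] //.
Qed.

Lemma cover_inv (s : {perm T}) (S : {set T}) : pinv s S -> cover [set O in porbits s | O \subset S] = S.
Proof.
move=> /forall_inP hS; apply/setP => x; apply/bigcupP/idP => [[O] | hx].
  by rewrite inE => /andP[_ sub] hxO; exact: (subsetP sub).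
exists (porbit s x); last exact: porbit_id.
rewrite inE imset_f //=; apply/subsetP => y /porbitP[i ->].
elim: i => [|i IH]; first by rewrite expg0 perm1.
by rewrite expgSr permM; apply: hS.
Qed.


Lemma G1 (s : {perm T}) k (x : R) : 0 <= x ->
  \sum_(S in Inv s k) x ^+ msz s S <= 2 ^+ cycle_count s 1 * (1 + x) ^+ total_cycles s.
Proof.
move=> x0.
pose f := fun S : {set T} => [set O in porbits s | O \subset S].
pose w := fun O : {set T} => if O \in porbits s then (if #|O| == 1%N then 1 else x) else 0.
have w0 : forall O, 0 <= w O by move=> O; rewrite /w; case: ifP => _ //; case: ifP.
have hw : forall S, x ^+ msz s S = \prod_(O in f S) w O.
  move=> S; rewrite /msz -prodr_const [LHS]big_mkcond [RHS]big_mkcond /=.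
  apply: eq_bigr => O _; rewrite /w !inE.
  by case: (O \in porbits s); case: (O \subset S); case: (#|O| == 1%N).
rewrite (eq_bigr _ (fun S _ => hw S)).
rewrite -(big_imset (fun A : {set {set T}} => \prod_(O in A) w O)) /=; last first.
  move=> S1 S2; rewrite !inE => /andP[_ h1] /andP[_ h2] e.
  by rewrite -(cover_inv h1) -(cover_inv h2); congr cover.
apply: le_trans (_ : \sum_(A : {set {set T}}) \prod_(O in A) w O <= _).
  rewrite [X in X <= _]big_mkcond /=; apply: ler_sum => A _.
  by case: ifP => _ //; apply: prodr_ge0.
rewrite sum_subsets.
rewrite (_ : \prod_(O : {set T}) (1 + w O) = \prod_(O in porbits s) (1 + w O)); last first.
  rewrite [RHS]big_mkcond /=; apply: eq_bigr => O _.
  by rewrite /w; case: ifP => //; rewrite addr0.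
apply: le_trans (_ : \prod_(O in porbits s) ((1 + x) * (if #|O| == 1%N then 2 else 1)) <= _).
  apply: ler_prod => O hO; rewrite addr_ge0 ?w0 //=.
  rewrite /w hO; case: ifP => _.
    by rewrite mulr_natr mulr2n lerD // lerDl.
  by rewrite mulr1.
rewrite big_split /= prodr_const mulrC ler_pM ?exprn_ge0 ?prodr_ge0 //.
- by move=> O _; case: ifP.
- by rewrite addr_ge0.
rewrite /cycle_count -prodr_const [X in X <= _]big_mkcond [X in _ <= X]big_mkcond /=.
by rewrite le_eqVlt; apply/orP; left; apply/eqP; apply: eq_bigr => O _; rewrite inE; case: (O \in porbits s).
Qed.


Lemma G2 (s t : {perm T}) k (x : R) : 0 <= x -> x <= 1 ->
  (#|Inv s k| * #|Inv t k|)%:R * x ^+ k <=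
  2 ^+ (cycle_count s 1 + cycle_count t 1) * (1 + x) ^+ (total_cycles s + total_cycles t).
Proof.
move=> x0 x1.
have -> : (#|Inv s k| * #|Inv t k|)%:R * x ^+ k =
   \sum_(S in Inv s k) \sum_(S' in Inv t k) x ^+ k.
  rewrite (eq_bigr (fun _ => x ^+ k *+ #|Inv t k|)); last by move=> S _; rewrite sumr_const.
  by rewrite sumr_const -mulrnA mulr_natl mulnC.
apply: le_trans (_ : \sum_(S in Inv s k) \sum_(S' in Inv t k) x ^+ msz s S * x ^+ msz t S' <= _).
  apply: ler_sum => S; rewrite inE => /andP[/eqP hS _].
  apply: ler_sum => S'; rewrite inE => /andP[/eqP hS' _].
  rewrite -exprD; apply: ler_wiXn2l => //.
  have := msz_le s S; have := msz_le t S'; rewrite hS hS' -!addnn; lia.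
rewrite -big_distrlr /= exprD exprD mulrACA.
by apply: ler_pM; rewrite ?sumr_ge0 ?G1 // => S _; rewrite exprn_ge0.
Qed.

End Gen.

Local Open Scope ring_scope.

Section Main.
Variable R : realType.
Variable T : finType.

Lemma classes_pos (s t : {perm T}) : (0 < #|conj_class s| * #|conj_class t|)%N.
Proof.
by rewrite muln_gt0; apply/andP; split; apply/card_gt0P; [exists s | exists t];
  apply: class_refl.
Qed.

Lemma EN_main (s t : {perm T}) k :
  (0 < k)%N -> (k.*2 <= #|T|)%N ->
  (total_cycles s + total_cycles t <= #|T|)%N ->
  EN R s t k <= (#|T|.+1)%:R * 2 ^+ (cycle_count s 1 + cycle_count t 1) *
     (((#|T| - k)%:R / (#|T|)%:R) ^+ (#|T| - (total_cycles s + total_cycles t))).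
Proof.
move=> k0 hk hab.
set n := #|T| in hk hab *.
have kn : (k < n)%N by rewrite -addnn in hk; lia.
set ab := (total_cycles s + total_cycles t)%N in hab *.
set F := (cycle_count s 1 + cycle_count t 1)%N.
set B := 'C(n, k).
have hEB : EN R s t k * B%:R <= (#|Inv s k| * #|Inv t k|)%:R.
  rewrite /EN; under eq_bigr do rewrite -natr_sum.
  rewrite -natr_sum mulrAC ler_pdivrMr ?ltr0n ?classes_pos // -!natrM ler_nat.
  have := sumN_le s t k; rewrite -/n -/B; lia.
have nk0 : 0 < (n - k)%:R :> R by rewrite ltr0n; lia.
have n0 : 0 < n%:R :> R by rewrite ltr0n; lia.
set x : R := k%:R / (n - k)%:R.
set r : R := (n - k)%:R / n%:R.
have x0 : 0 <= x by rewrite /x divr_ge0 ?ler0n ?ltW.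
have x1 : x <= 1.
  by rewrite /x ler_pdivrMr // mul1r ler_nat; rewrite -addnn in hk; lia.
have hG := G2 s t k x0 x1.
have hB := binom_lower k0 kn.
have hxr : x ^+ k * r ^+ n * (n ^ n)%:R = (k ^ k * (n - k) ^ (n - k))%:R.
  rewrite /x /r !expr_div_n !natrM !natrX.
  have -> : ((n - k)%:R : R) ^+ n = (n - k)%:R ^+ k * (n - k)%:R ^+ (n - k).
    by rewrite -exprD subnKC // ltnW.
  field; rewrite ?expf_neq0 // ?lt0r_neq0 //.
have key : 1 <= (n.+1)%:R * (x ^+ k * B%:R) * r ^+ n.
  have nn0 : 0 < (n ^ n)%:R :> R by rewrite ltr0n expn_gt0; apply/orP; left; lia.
  rewrite -(ler_pM2r nn0) mul1r.
  rewrite (_ : _ * _ * _ * _ = (n.+1)%:R * B%:R * (x ^+ k * r ^+ n * (n ^ n)%:R)); last by ring.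
  by rewrite hxr -!natrM ler_nat; lia.
have EN0 : 0 <= EN R s t k.
  by rewrite /EN divr_ge0 // sumr_ge0 // => p _; rewrite sumr_ge0.
have h1x : 1 + x = r^-1.
  have nk : n%:R - k%:R != 0 :> R by rewrite -natrB; [exact: lt0r_neq0 | exact: ltnW].
  rewrite /x /r natrB; last exact: ltnW.
  by field; rewrite nk (lt0r_neq0 n0).
apply: le_trans (_ : EN R s t k * ((n.+1)%:R * (x ^+ k * B%:R) * r ^+ n) <= _).
  by rewrite -{1}(mulr1 (EN R s t k)) ler_wpM2l.
have r0 : 0 < r by rewrite /r divr_gt0.
set E := EN R s t k in hEB EN0 *.
rewrite (_ : _ * _ = (n.+1)%:R * r ^+ n * ((E * B%:R) * x ^+ k)); last by ring.
apply: le_trans (_ : (n.+1)%:R * r ^+ n * ((#|Inv s k| * #|Inv t k|)%:R * x ^+ k) <= _).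
  apply: ler_wpM2l; first by rewrite mulr_ge0 ?exprn_ge0 ?ltW.
  by apply: ler_wpM2r; rewrite ?exprn_ge0.
apply: le_trans (_ : (n.+1)%:R * r ^+ n * (2 ^+ F * (1 + x) ^+ ab) <= _).
  by apply: ler_wpM2l; first by rewrite mulr_ge0 ?exprn_ge0 ?ltW.
have rab : r ^+ ab != 0 by rewrite expf_neq0 // lt0r_neq0.
have ern : r ^+ n = r ^+ (n - ab) * r ^+ ab by rewrite -exprD subnK.
rewrite h1x exprVn ern.
set u := r ^+ ab; set v := r ^+ (n - ab); set n1 := (n.+1)%:R; set w := 2 ^+ F.
have -> : n1 * (v * u) * (w * u^-1) = n1 * w * v * (u * u^-1).
  rewrite !mulrA; congr (_ * _).
  by rewrite [n1 * v * u * w]mulrAC [n1 * v * w]mulrAC.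
by rewrite mulfV ?rab // mulr1.
Qed.

End Main.

Section Fin.
Variable R : realType.

Lemma N_le (T : finType) (p q : {perm T}) k : (N_orbits p q k <= #|T|)%N.
Proof.
rewrite /N_orbits; apply: leq_trans (_ : #|orbit 'P <<[set p; q]>>%g @: [set: T]| <= _)%N.
  by apply: subset_leq_card; apply/subsetP => O; rewrite inE => /andP[].
by apply: leq_trans (leq_imset_card _ _) _; exact: max_card.
Qed.

Lemma EN_triv (T : finType) (s t : {perm T}) k : EN R s t k <= #|T|%:R.
Proof.
rewrite /EN ler_pdivrMr ?ltr0n ?classes_pos //.
apply: le_trans (_ : \sum_(p in conj_class s) \sum_(q in conj_class t) (#|T|%:R : R) <= _).
  apply: ler_sum => p _; apply: ler_sum => q _; rewrite ler_nat; exact: N_le.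
under eq_bigr do rewrite sumr_const.
by rewrite sumr_const -mulrnA mulr_natr mulnC.
Qed.

Lemma ln_small (e : R) : 0 < e -> exists N : nat, forall n : nat, (N <= n)%N ->
  ln ((n.+1)%:R : R) <= e * n%:R.
Proof.
move=> e0; have b0 : 0 <= 2 / (e * e) by rewrite divr_ge0 // mulr_ge0 // ltW.
exists (Num.Def.archi_bound (2 / (e * e))).+1 => n hn.
have hb := archi_boundP b0.
have hn' : 2 / (e * e) < n%:R.
  apply: lt_le_trans hb _; rewrite ler_nat; exact: ltnW.
have ee : 0 < e * e by rewrite mulr_gt0.
have h2 : 2 < e * e * n%:R by rewrite mulrC -ltr_pdivrMr.
have n0 : 0 <= n%:R :> R by rewrite ler0n.
have hx : 0 <= e * n%:R by rewrite mulr_ge0 // ltW.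
have := expR_ge1Dxn 1 hx; rewrite (_ : (2`!)%:R = 2 :> R) // => hE.
have hle : (n.+1)%:R <= expR (e * n%:R).
  apply: le_trans hE; rewrite -addn1 natrD addrC lerD2l.
  rewrite ler_pdivlMr //; nra.
rewrite -(expRK (e * n%:R)) ler_ln // ?posrE ?ltr0n // ?expR_gt0 //.
Qed.

Lemma pow_small (n k m : nat) (d : R) : (0 < k)%N -> (k < n)%N -> 0 <= d ->
  d * n%:R <= m%:R ->
  ((n - k)%:R / n%:R) ^+ m <= expR (- (d * k%:R)).
Proof.
move=> k0 kn d0 hm.
have n0 : 0 < n%:R :> R by rewrite ltr0n; lia.
set r := (n - k)%:R / n%:R.
have r0 : 0 < r by rewrite /r divr_gt0 // ltr0n; lia.
have hr1 : r - 1 = - (k%:R / n%:R).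
  rewrite /r natrB; last exact: ltnW.
  by field; rewrite lt0r_neq0.
have hL : ln r <= r - 1.
  by have := @le_ln1Dx R (r - 1); rewrite addrCA subrr addr0; apply; lra.
rewrite -(lnK r0) -expRM_natl ler_expR.
have hk : 0 <= k%:R / n%:R :> R by rewrite divr_ge0 ?ler0n // ltW.
have hL0 : ln r <= 0 by lra.
apply: le_trans (_ : d * n%:R * ln r <= _).
  by apply: ler_wnM2r.
apply: le_trans (_ : d * n%:R * (r - 1) <= _).
  by apply: ler_wpM2l => //; rewrite mulr_ge0 // ltW.
rewrite hr1 mulrN lerN2 -mulrA; apply: ler_wpM2l => //.
by rewrite mulrC divfK // lt0r_neq0.
Qed.
End Fin.

Unset Implicit Arguments.

Theorem lemma3p4 (R : realType) (s t : forall n : nat, {perm 'I_n}) :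
  little_o_n (fun n => ((cycle_count (s n) 1 + cycle_count (t n) 1)%N)%:R : R) ->
  (exists delta : R, 0 < delta /\ exists N : nat, forall n : nat, (N <= n)%N ->
     ((total_cycles (s n) + total_cycles (t n))%N)%:R <= (1 - delta) * n%:R) ->
  exists eta : R, 0 < eta /\
    exists g : nat -> R, little_o_n g /\
      forall n k : nat, (1 <= k)%N -> (k.*2 <= n)%N ->
        EN R (s n) (t n) k <= expR (- (eta * k%:R) + g n).
Proof.
move=> hF [d [d0 [N0 hN0]]].
pose Fn := fun n => (cycle_count (s n) 1 + cycle_count (t n) 1)%N.
exists d; split => //.
exists (fun n => ln ((n.+1)%:R : R) + (Fn n)%:R + (if (n < N0)%N then d * n%:R else 0)).
split.
  move=> eps e0.
  have e3 : 0 < eps / 3 by rewrite divr_gt0.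
  have [N1 h1] := hF _ e3.
  have [N2 h2] := ln_small e3.
  exists (maxn (maxn N1 N2) N0) => n hn.
  have hn1 : (N1 <= n)%N by lia.
  have hn2 : (N2 <= n)%N by lia.
  have hn0 : (N0 <= n)%N by lia.
  have := h1 n hn1; have := h2 n hn2; rewrite ltnNge hn0 /= addr0.
  have lnp : 0 <= ln ((n.+1)%:R : R) by apply: ln_ge0; rewrite ler1n.
  move=> a b; rewrite ger0_norm ?ler0n // in b.
  rewrite ger0_norm; last by rewrite addr_ge0 // ler0n.
  rewrite /Fn.
  have y0 : 0 <= eps * n%:R by rewrite mulr_ge0 ?ler0n // ltW.
  rewrite (mulrAC eps) in a b.
  lra.
move=> n k hk hkn.
case: (ltnP n N0) => hn.
  apply: le_trans (EN_triv _ _ _ _) _; rewrite card_ord.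
  apply: le_trans (_ : (n.+1)%:R <= _); first by rewrite ler_nat.
  have hp : ((n.+1)%:R : R) \in Num.pos by rewrite posrE ltr0n.
  rewrite -{1}(lnK hp) ler_expR.
  have F0 : 0 <= (Fn n)%:R :> R by rewrite ler0n.
  have hkn' : d * k%:R <= d * n%:R.
    by apply: ler_wpM2l; [exact: ltW | rewrite ler_nat; lia].
  lra.
rewrite addr0.
have hab := hN0 n hn.
have dn : 0 <= d * n%:R by rewrite mulr_ge0 ?ler0n // ltW.
have hab' : (total_cycles (s n) + total_cycles (t n) <= n)%N.
  by rewrite -(ler_nat R); lra.
have kn : (k < n)%N by rewrite -addnn in hkn; lia.
have hkn2 : (k.*2 <= #|'I_n|)%N by rewrite card_ord.
have hab2 : (total_cycles (s n) + total_cycles (t n) <= #|'I_n|)%N by rewrite card_ord.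
have := EN_main R hk hkn2 hab2; rewrite card_ord => hE.
apply: le_trans hE _.
rewrite addrC expRD expRD.
have hpow : (((n - k)%:R / n%:R) ^+ (n - (total_cycles (s n) + total_cycles (t n))) : R)
    <= expR (- (d * k%:R)).
  apply: pow_small => //; first exact: ltW.
  rewrite natrB //; lra.
have hpow0 : 0 <= (((n - k)%:R / n%:R) ^+ (n - (total_cycles (s n) + total_cycles (t n))) : R).
  by rewrite exprn_ge0 // divr_ge0 ?ler0n.
apply: ler_pM => //; first by rewrite mulr_ge0 ?exprn_ge0 ?ler0n.
apply: ler_pM; rewrite ?ler0n ?exprn_ge0 //.
  have hp : ((n.+1)%:R : R) \in Num.pos by rewrite posrE ltr0n.
  by rewrite (lnK hp).
rewrite -[(Fn n)%:R]mulr1 expRM_natl /Fn.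
apply: lerXn2r; rewrite ?nnegrE ?expR_ge0 //.
by have := expR_ge1Dx (1 : R).
Qed.
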